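(* Let $R \subseteq S$ be an extension of commutative rings such that $S$ is generated as an $R$-module by $1, f_1, \ldots, f_n$ ($n>0$, $f_i\in S$), and suppose $S$ has an exact presentation $R^{\oplus q} \xrightarrow{\mathbb M} R^{\oplus(n+1)} \xrightarrow{\varepsilon} S \to 0$ with $q>0$ and $\varepsilon = [1\ f_1\ \cdots\ f_n]$. If $f_if_j \in R$ for all $1 \le i,j\le n$, then $R$ is strictly closed in $S$.
   Context: For an extension of commutative rings $R \subseteq S$, the strict closure of $R$ in $S$ is $R^* = \{\alpha \in S \mid \alpha\otimes 1 = 1\otimes \alpha \text{ in } S\otimes_R S\}$; $R$ is strictly closed in $S$ if $R=R^*$. *)

(* Defs.v *)
From HB Require Import structures.
From mathcomp Require Import all_boot all_order all_algebra.
Set Implicit Arguments. Unset Strict Implicit. Unset Printing Implicit Defensive.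
Import Order.TTheory GRing.Theory Num.Theory.
Local Open Scope ring_scope.

(* The tensor product S (x)_R S is built in the standard
   way as the free abelian group on S * S modulo the subgroup generated by
   the bilinearity and R-balancedness relations. *)

Section Tensor.
Variable S : comPzRingType.
Variable R : {pred S}.

(* formal Z-linear combinations of symbols s (x) t *)
Definition fsum := seq (int * (S * S)).

Definition fcoef (l : fsum) (p : S * S) : int :=
  \sum_(e <- l | e.2 == p) e.1.

Definition rel_addl (s s' t : S) : fsum :=
  [:: (1, (s + s', t)); (-1, (s, t)); (-1, (s', t))].
Definition rel_addr (s t t' : S) : fsum :=
  [:: (1, (s, t + t')); (-1, (s, t)); (-1, (s, t'))].
Definition rel_bal (r s t : S) : fsum :=
  [:: (1, (r * s, t)); (-1, (s, r * t))].

Definition is_tensor_rel (g : fsum) : Prop :=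
  (exists s s' t, g = rel_addl s s' t) \/
  (exists s t t', g = rel_addr s t t') \/
  (exists r s t, r \in R /\ g = rel_bal r s t).

(* a formal sum maps to 0 in S (x)_R S: it is (as an element of the free
   abelian group) an integer combination of generating relations *)
Definition tensor_zero (l : fsum) : Prop :=
  exists gs : seq (int * fsum),
    (forall g, g \in gs -> is_tensor_rel g.2) /\
    forall p, fcoef l p = \sum_(g <- gs) g.1 * fcoef g.2 p.

Definition tensor_eq (a b c d : S) : Prop :=
  tensor_zero [:: (1, (a, b)); (-1, (c, d))].

Definition strict_closure : S -> Prop := fun alpha => tensor_eq alpha 1 1 alpha.
Definition strictly_closed : Prop := forall alpha : S, alpha \in R <-> strict_closure alpha.

End Tensor.

(* the vector [1 f_1 ... f_n] as a function on 'I_n.+1 (index 0 |-> 1) *)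
Definition eps_vec (S : comPzRingType) (n : nat) (f : 'I_n -> S) (i : 'I_n.+1) : S :=
  oapp f 1 (unlift ord0 i).

(* Main.v *)
Require Import Defs.
From mathcomp Require Import all_boot all_order all_algebra.
From Stdlib Require Import ClassicalEpsilon.
From mathcomp Require Import ring.
Import GRing.Theory.
Local Open Scope ring_scope.
Set Implicit Arguments. Unset Strict Implicit.

Section Closure.
Variable S : comPzRingType.
Variable R : {pred S}.
Hypothesis hR : subring_closed R.

Lemma rR1 : 1 \in R. Proof. by case: hR. Qed.
Lemma rRB x y : x \in R -> y \in R -> x - y \in R.
Proof. by case: hR => _ h _; apply: h. Qed.
Lemma rRM x y : x \in R -> y \in R -> x * y \in R.
Proof. by case: hR => _ _ h; apply: h. Qed.
Lemma rR0 : 0 \in R. Proof. by rewrite -(subrr 1) rRB // rR1. Qed.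
Lemma rRN x : x \in R -> - x \in R.
Proof. by move=> h; rewrite -sub0r rRB // rR0. Qed.
Lemma rRD x y : x \in R -> y \in R -> x + y \in R.
Proof. by move=> hx hy; rewrite -(opprK y) rRB // rRN. Qed.
Lemma rRsum (I : Type) (r : seq I) (F : I -> S) :
  (forall i, F i \in R) -> \sum_(i <- r) F i \in R.
Proof.
move=> h; elim: r => [|a r IH]; first by rewrite big_nil rR0.
by rewrite big_cons rRD.
Qed.
Lemma rRMn x k : x \in R -> x *+ k \in R.
Proof.
move=> h; elim: k => [|k IH]; first by rewrite mulr0n rR0.
by rewrite mulrS rRD.
Qed.
Lemma rRMz x z : x \in R -> x *~ z \in R.
Proof.
move=> h; case: z => k; first exact: rRMn.
by rewrite NegzE mulrNz rRN // rRMn.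
Qed.

Definition Fsum (F : S * S -> S) (l : fsum S) : S :=
  \sum_(e <- l) F e.2 *~ e.1.

Lemma fcoef_cons (e : int * (S * S)) (l : fsum S) (p : S * S) :
  fcoef (e :: l) p = (if e.2 == p then e.1 else 0) + fcoef l p.
Proof. by rewrite /fcoef big_cons; case: eqP => //; rewrite add0r. Qed.

Lemma Fsum_expand F (P : seq (S * S)) l : uniq P ->
  (forall e, e \in l -> e.2 \in P) ->
  Fsum F l = \sum_(p <- P) F p *~ fcoef l p.
Proof.
move=> uP; elim: l => [|e l IH] hl.
  rewrite /Fsum big_nil; apply/esym; apply: big1 => p _.
  by rewrite /fcoef big_nil mulr0z.
rewrite /Fsum big_cons -/(Fsum F l) IH; last first.
  by move=> e' he'; apply: hl; rewrite inE he' orbT.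
under [X in _ = X]eq_bigr => p _ do rewrite fcoef_cons mulrzDr.
rewrite big_split /=; congr (_ + _).
rewrite (bigD1_seq e.2) //=; last by apply: hl; rewrite inE eqxx.
rewrite eqxx big1 ?addr0 // => p hp.
by rewrite eq_sym (negbTE hp) mulr0z.
Qed.

Lemma Fsum_tensor_zero F l :
  (forall g, is_tensor_rel R g -> Fsum F g \in R) ->
  tensor_zero R l -> Fsum F l \in R.
Proof.
move=> hrel [gs [hgs hco]].
set P := undup ([seq e.2 | e <- l] ++ flatten [seq [seq e.2 | e <- g.2] | g <- gs]).
have uP : uniq P by apply: undup_uniq.
rewrite (@Fsum_expand F P l uP); last first.
  by move=> e he; rewrite mem_undup mem_cat; apply/orP; left; apply/mapP; exists e.
have -> : \sum_(p <- P) F p *~ fcoef l p =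
          \sum_(g <- gs) (\sum_(p <- P) F p *~ fcoef g.2 p) *~ g.1.
  under eq_bigr => p _ do rewrite hco mulrz_sumr.
  rewrite exchange_big /=; apply: eq_bigr => g _.
  rewrite mulrz_suml; apply: eq_bigr => p _.
  by rewrite -mulrzA mulrC.
have : forall g, g \in gs -> (\sum_(p <- P) F p *~ fcoef g.2 p) \in R.
  move=> g hg; rewrite -(@Fsum_expand F P g.2 uP); first by apply: hrel; apply: hgs.
  move=> e he; rewrite mem_undup mem_cat; apply/orP; right.
  apply/flattenP; exists [seq e0.2 | e0 <- g.2]; first by apply/mapP; exists g.
  by apply/mapP; exists e.
clearbody P; elim: gs {hgs hco} => [|g gs IH] h; first by rewrite big_nil rR0.
rewrite big_cons rRD ?rRMz ?h ?inE ?eqxx //.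
by apply: IH => g' hg'; apply: h; rewrite inE hg' orbT.
Qed.

Variable n : nat.
Variable f : 'I_n -> S.
Hypothesis hff : forall i j, f i * f j \in R.

Definition isrep (t : S) (p : S * ('I_n -> S)) : Prop :=
  [/\ p.1 \in R, forall i, p.2 i \in R & t = p.1 + \sum_i p.2 i * f i].

Hypothesis hgen : forall t, exists p, isrep t p.

Lemma key (s d0 : S) (d : 'I_n -> S) :
  d0 \in R -> (forall i, d i \in R) -> d0 + \sum_i d i * f i = 0 ->
  s * d0 \in R.
Proof.
move=> hd0 hd hsum.
have ed0 : d0 = - \sum_i d i * f i by apply/eqP; rewrite -subr_eq0 opprK hsum.
have [[u0 u] [hu0 hu ->]] := hgen s.
rewrite mulrDl; apply: rRD; first exact: rRM.
rewrite mulr_suml; apply: rRsum => k.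
rewrite ed0 mulrN mulr_sumr; apply: rRN; apply: rRsum => i.
have -> : (u0, u).2 k * f k * (d i * f i) = (u k * d i) * (f k * f i).
  by rewrite /= -!mulrA; congr (_ * _); rewrite mulrCA.
by apply: rRM; [apply: rRM; [exact: hu|exact: hd]|exact: hff].
Qed.

Definition cc (t : S) : S := (proj1_sig (constructive_indefinite_description _ (hgen t))).1.

Lemma cc_rep t : exists p, isrep t p /\ cc t = p.1.
Proof.
rewrite /cc; case: (constructive_indefinite_description _ _) => p hp /=.
by exists p.
Qed.

Lemma cc_wd t p s : isrep t p -> s * (cc t - p.1) \in R.
Proof.
move=> [h1 h2 h3]; have [[q0 q] [[k1 k2 k3] ->]] := cc_rep t.
apply: (@key s (q0 - p.1) (fun i => q i - p.2 i)) => /=; first exact: rRB.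
  by move=> i; apply: rRB.
under eq_bigr => i _ do rewrite mulrBl.
rewrite sumrB; rewrite h3 in k3.
by rewrite addrACA -opprD -k3 subrr.
Qed.

Lemma cc_R t : cc t \in R.
Proof. by have [p [[h1 _ _] ->]] := cc_rep t. Qed.

Definition Phi (e : S * S) : S := e.1 * cc e.2.

Lemma Phi_rel g : is_tensor_rel R g -> Fsum Phi g \in R.
Proof.
case=> [[s [s' [t ->]]]|[[s [t [t' ->]]]|[r [s [t [hr ->]]]]]];
  rewrite /Fsum !big_cons big_nil /Phi /= !mulr1z !mulrN1z addr0.
- by rewrite (_ : _ + _ = 0) ?rR0 //; ring.
- have [p [hp _]] := cc_rep t; have [p' [hp' _]] := cc_rep t'.
  have hpp : isrep (t + t') (p.1 + p'.1, fun i => p.2 i + p'.2 i).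
    case: hp => a1 a2 a3; case: hp' => b1 b2 b3; split => /=.
    - exact: rRD.
    - by move=> i; apply: rRD.
    - rewrite a3 b3; under [X in _ = _ + X]eq_bigr => i _ do rewrite mulrDl.
      rewrite big_split /=; ring.
  have := cc_wd s hpp; have := cc_wd s hp; have := cc_wd s hp'.
  move=> h1 h2 h3.
  have -> : s * cc (t + t') + (- (s * cc t) - s * cc t') =
     s * (cc (t + t') - (p.1 + p'.1)%R) - s * (cc t - p.1) - s * (cc t' - p'.1).
    by ring.
  by rewrite !rRB.
- have [p [hp _]] := cc_rep t.
  have hrp : isrep (r * t) (r * p.1, fun i => r * p.2 i).
    case: hp => a1 a2 a3; split => /=.
    - exact: rRM.
    - by move=> i; apply: rRM.
    - rewrite a3 mulrDr mulr_sumr /=; congr (_ + _).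
      by apply: eq_bigr => i _; rewrite mulrA.
  have h1 := cc_wd s hrp; have h2 := cc_wd (r * s) hp.
  have -> : r * s * cc t - s * cc (r * t) =
     r * s * (cc t - p.1) - s * (cc (r * t) - r * p.1).
    by ring.
  by rewrite rRB.
Qed.

End Closure.

Theorem corollary2p7 (S : comPzRingType) (R : {pred S}) (n q : nat)
    (f : 'I_n -> S) (M : 'M[S]_(q, n.+1)) :
  subring_closed R ->
  (0 < n)%N -> (0 < q)%N ->
  (* S is generated as an R-module by 1, f_1, ..., f_n (epsilon surjective) *)
  (forall s : S, exists v : 'rV[S]_n.+1,
      (forall i, v 0 i \in R) /\ s = \sum_i v 0 i * eps_vec f i) ->
  (* the matrix M has entries in R, i.e. is a map R^q -> R^(n+1) *)
  (forall i j, M i j \in R) ->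
  (* exactness at R^(n+1): ker epsilon = im M *)
  (forall v : 'rV[S]_n.+1, (forall i, v 0 i \in R) ->
      (\sum_i v 0 i * eps_vec f i = 0 <->
       exists x : 'rV[S]_q, (forall j, x 0 j \in R) /\ v = x *m M)) ->
  (forall i j, f i * f j \in R) ->
  strictly_closed R.
Proof.
move=> hR _ _ hgen0 _ _ hff.
have hgen : forall t, exists p, isrep R f t p.
  move=> t; have [v [hv ->]] := hgen0 t.
  exists (v 0 ord0, fun i => v 0 (lift ord0 i)); split => //=.
  rewrite big_ord_recl /eps_vec /= unlift_none /= mulr1; congr (_ + _).
  by apply: eq_bigr => i _; rewrite liftK.
move=> alpha; split.
- move=> ha; exists [:: (1%Z, rel_bal alpha 1 1)]; split.
    by move=> g; rewrite inE => /eqP ->; right; right; exists alpha, 1, 1.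
  move=> p; rewrite big_cons big_nil addr0 mul1r /fcoef !big_cons !big_nil /=.
  by rewrite !mulr1.
- move=> hz.
  have := Fsum_tensor_zero hR (Phi_rel hR hff hgen) hz.
  rewrite /Fsum !big_cons big_nil /Phi /= mulr1z mulrN1z addr0 mul1r.
  have h1 : isrep R f 1 (1, fun _ => 0).
    split => //=; [exact: rR1 hR| move=> i; exact: rR0 hR|].
    by rewrite big1 ?addr0 // => i _; rewrite mul0r.
  have := cc_wd hR hff hgen alpha h1; rewrite /= mulrBr mulr1 => hw hd.
  rewrite (_ : alpha = ((alpha * cc hgen 1 - cc hgen alpha) - (alpha * cc hgen 1 - alpha)) + cc hgen alpha); last by ring.
  by apply: (rRD hR); [exact: (rRB hR)|exact: cc_R].
Qed.
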